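(* Let $\mathcal{T}$ be an MPQ-tree of an interval graph $G=(V,E)$, let $(x,y)\in E$ with $x$ over $y$ and $node(x)\neq node(y)$. If the $\langle x,y\rangle$-tree-path is not almost rotable, then $(x,y)$ is not an interval edge.
   Context: Graphs are finite and simple; for $G=(V,E)$ and $e\in E$, $G-e=(V,E\setminus\{e\})$. An edge $(x,y)\in E$ of an interval graph $G$ is an interval edge if $G-(x,y)$ is an interval graph. An MPQ-tree of an interval graph $G=(V,E)$, $V=\{1,\dots,n\}$, is a rooted plane tree whose nodes are P-nodes and Q-nodes. Each P-node carries a (possibly empty) set of vertices. A Q-node has $k\ge 3$ ordered positions $1,\dots,k$; position $i$ carries a set $S_i\subseteq V$ (the $i$-th section) and a child subtree $T_i$, which may be empty. Every vertex $v$ is assigned to exactly one node $node(v)$: either $v$ lies in the set of the P-node $node(v)$, or $node(v)$ is a Q-node and $v$ lies exactly in the sections $S_{l(v)},\dots,S_{r(v)}$ of it, with $l(v)<r(v)$. For a node with child subtrees $T_1,\dots,T_k$, $V_i$ denotes the set of vertices assigned to nodes of $T_i$ ($V_i=\emptyset$ if $T_i$ is empty). The maximal cliques of $G$ are in bijection with the descending paths from the root which at a P-node continue into one of its children (stopping if there is none) and at a Q-node choose a position $i$ and continue into $T_i$ (stopping if $T_i$ is empty); the clique is the union of the sets of the visited P-nodes and the chosen sections. Reading these cliques left to right gives a linear order of the maximal cliques, and the orders obtained this way after arbitrarily permuting children of P-nodes and reversing the positions of Q-nodes are exactly the orders of the maximal cliques of $G$ in which the cliques containing any fixed vertex are consecutive.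 Moreover, for every Q-node with sections $S_1,\dots,S_k$: (a) $V_1\neq\emptyset$ and $V_k\ne\emptyset$; (b) $S_1\subseteq S_2$ and $S_k\subseteq S_{k-1}$; (c) $S_{i-1}\cap S_i\neq\emptyset$ for $2\le i\le k$; (d) $S_{i-1}\neq S_i$ for $2\le i\le k$; (e) $(S_i\cap S_{i+1})\setminus S_1\neq\emptyset$ and $(S_{i-1}\cap S_i)\setminus S_k\neq\emptyset$ for $2\le i\le k-1$; (f) $(S_{i-1}\cup V_{i-1})\setminus S_i\neq\emptyset$ and $(S_i\cup V_i)\setminus S_{i-1}\neq\emptyset$ for $2\le i\le k$; and further (g) no empty P-node has an empty P-node as its parent, (h) no P-node has exactly one child whose root is a P-node, (i) every child subtree of a P-node is nonempty. We say $x$ is over $y$ if $node(x)$ is the lowest common ancestor of $node(x)$ and $node(y)$ in $\mathcal{T}$. For $x$ over $y$ with $node(x)\ne node(y)$, the $\langle x,y\rangle$-tree-path is the tree path $node(x)=n_1,n_2,\dots,n_t=node(y)$. For a Q-node with sections $S_1,\dots,S_k$, section $S_a$ is central if $1<a<k$. The path goes through a central section if for some $1<i<t$, $n_i$ is a Q-node and $n_{i+1}$ lies in the subtree $T_a$ of a central section $S_a$ of $n_i$. The path is almost rotable if it does not go through a central section and $n_t$ is a P-node that is a leaf of $\mathcal{T}$. *)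

(* Defs.v *)
From Stdlib Require Import Permutation.
From HB Require Import structures.
From mathcomp Require Import all_boot.

Set Implicit Arguments.
Unset Strict Implicit.
Unset Printing Implicit Defensive.

Section Graphs.
Variable V : finType.

(* A finite simple graph on V is an irreflexive symmetric relation adj. *)

(* Interval graph: intersection graph of closed intervals [l u, r u]
   (integer endpoints suffice for finite graphs). *)
Definition is_interval_graph (adj : rel V) : Prop :=
  exists l r : V -> nat,
    (forall u, l u <= r u) /\
    (forall u v, u != v -> (adj u v <-> (l u <= r v) /\ (l v <= r u))).

Definition remove_edge (adj : rel V) (x y : V) : rel V :=
  fun u v => adj u v && ~~ (((u == x) && (v == y)) || ((u == y) && (v == x))).

Definition interval_edge (adj : rel V) (x y : V) : Prop :=
  adj x y /\ is_interval_graph (remove_edge adj x y).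

Definition is_clique (adj : rel V) (K : {set V}) : Prop :=
  forall u v, u \in K -> v \in K -> u != v -> adj u v.

Definition is_maxclique (adj : rel V) (K : {set V}) : Prop :=
  is_clique adj K /\ forall K', is_clique adj K' -> K \subset K' -> K' = K.

Definition consecutive_order (adj : rel V) (L : seq {set V}) : Prop :=
  uniq L /\ (forall C, C \in L <-> is_maxclique adj C) /\
  forall v i j k, i <= j -> j <= k -> k < size L ->
    v \in nth set0 L i -> v \in nth set0 L k -> v \in nth set0 L j.

End Graphs.

(* PNode S cs : a P-node carrying the set S with ordered children cs
                (every child subtree is nonempty).
   QNode ss   : a Q-node whose i-th position (0-based) carries the section
                (ss`_i).1 and the (possibly empty) child subtree (ss`_i).2. *)
Inductive mpq (V : finType) : Type :=
| PNode : {set V} -> seq (mpq V) -> mpq V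
| QNode : seq ({set V} * option (mpq V)) -> mpq V.

Arguments PNode {V}.
Arguments QNode {V}.

Section Trees.
Variable V : finType.
Implicit Types (t : mpq V) (a : seq nat).

(* Nodes are addressed by the sequence of child indices (for a P-node) /
   positions (for a Q-node) from the root. *)
Fixpoint subt t a {struct a} : option (mpq V) :=
  match a with
  | [::] => Some t
  | i :: a' =>
    match t with
    | PNode _ cs => obind (fun c => subt c a') (onth cs i)
    | QNode ss => obind (fun sc => obind (fun c => subt c a') sc.2) (onth ss i)
    end
  end.

Definition section (ss : seq ({set V} * option (mpq V))) (i : nat) : {set V} :=
  (nth (set0, None) ss i).1.

Definition inode t a (v : V) : Prop :=
  (exists S cs, subt t a = Some (PNode S cs) /\ v \in S) \/
  (exists ss, subt t a = Some (QNode ss) /\ exists i, i < size ss /\ v \in section ss i).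

(* clique of a descending path from the root *)
Fixpoint cliq t (p : seq nat) {struct p} : option {set V} :=
  match p, t with
  | [::], PNode X [::] => Some X
  | [::], _ => None
  | i :: p', PNode X cs => obind (fun c => omap (setU X) (cliq c p')) (onth cs i)
  | i :: p', QNode ss =>
    match onth ss i with
    | Some (Si, None) => if p' is [::] then Some Si else None
    | Some (Si, Some c) => omap (setU Si) (cliq c p')
    | None => None
    end
  end.

Inductive ord : mpq V -> seq {set V} -> Prop :=
| ordPleaf X : ord (PNode X [::]) [:: X]
| ordP X cs cs' L : cs <> [::] -> Permutation cs cs' -> ordl cs' L ->
    ord (PNode X cs) (map (setU X) L)
| ordQ ss ss' L : (ss' = ss \/ ss' = rev ss) -> ordq ss' L -> ord (QNode ss) L
with ordl : seq (mpq V) -> seq {set V} -> Prop :=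
| ordl0 : ordl [::] [::]
| ordlc c cs L1 L2 : ord c L1 -> ordl cs L2 -> ordl (c :: cs) (L1 ++ L2)
with ordq : seq ({set V} * option (mpq V)) -> seq {set V} -> Prop :=
| ordq0 : ordq [::] [::]
| ordqN Si ss L : ordq ss L -> ordq ((Si, None) :: ss) (Si :: L)
| ordqS Si c ss L1 L2 : ord c L1 -> ordq ss L2 ->
    ordq ((Si, Some c) :: ss) (map (setU Si) L1 ++ L2).

Definition inV t q i (v : V) : Prop := exists a, inode t (q ++ i :: a) v.

Definition is_MPQ (adj : rel V) t : Prop :=
  (forall v, exists a, inode t a v /\ forall a', inode t a' v -> a' = a) /\
  (forall a ss, subt t a = Some (QNode ss) ->
     3 <= size ss /\
     forall v, (exists i, i < size ss /\ v \in section ss i) ->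
       exists l r, l < r /\ r < size ss /\
         forall i, i < size ss -> (v \in section ss i <-> l <= i /\ i <= r)) /\
  (forall p C, cliq t p = Some C -> is_maxclique adj C) /\
  (forall p p' C, cliq t p = Some C -> cliq t p' = Some C -> p = p') /\
  (forall C, is_maxclique adj C -> exists p, cliq t p = Some C) /\
  (forall L, ord t L <-> consecutive_order adj L) /\
  (* properties (a)-(f) of Q-nodes (0-based positions 0..k-1) *)
  (forall q ss, subt t q = Some (QNode ss) ->
     let k := size ss in
     let Sec := section ss in
     (exists v, inV t q 0 v) /\ (exists v, inV t q k.-1 v) /\
     Sec 0 \subset Sec 1 /\ Sec k.-1 \subset Sec k.-2 /\
     (forall i, 0 < i -> i < k ->
        Sec i.-1 :&: Sec i != set0 /\
        Sec i.-1 != Sec i /\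
        (exists v, (v \in Sec i.-1 \/ inV t q i.-1 v) /\ v \notin Sec i) /\
                  (exists v, (v \in Sec i \/ inV t q i v) /\ v \notin Sec i.-1)) /\
     (forall i, 0 < i -> i < k.-1 ->
        (Sec i :&: Sec i.+1) :\: Sec 0 != set0 /\
        (Sec i.-1 :&: Sec i) :\: Sec k.-1 != set0)) /\
  (forall a i cs cs', subt t a = Some (PNode set0 cs) ->
     subt t (rcons a i) <> Some (PNode set0 cs')) /\
  (forall a S S' cs', subt t a <> Some (PNode S [:: PNode S' cs'])).
  (* (i) holds by construction: child subtrees of P-nodes are trees *)

(* the <x,y>-tree-path n_1 = node(x), ..., n_t = node(y) consists of the
   prefixes of ay of length >= size ax; it goes through a central section
   if some inner node n_i (1<i<t) is a Q-node and n_(i+1) lies in T_a for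
   a central position a (0 < a < k-1 in 0-based indexing). *)
Definition through_central t (ax ay : seq nat) : Prop :=
  exists m, size ax < m /\ m < size ay /\
    exists ss, subt t (take m ay) = Some (QNode ss) /\
      0 < nth 0 ay m /\ nth 0 ay m < (size ss).-1.

Definition almost_rotable t (ax ay : seq nat) : Prop :=
  ~ through_central t ax ay /\ exists S, subt t ay = Some (PNode S [::]).

End Trees.

(* Main.v *)
Require Import Defs.
From Stdlib Require Import Classical.
From mathcomp Require Import all_boot zify.
Set Implicit Arguments. Unset Strict Implicit. Unset Printing Implicit Defensive.

Section Basic.
Variable V : finType.
Implicit Types (t s : mpq V) (p q a b : seq nat).

Lemma subt_cat t a b : subt t (a ++ b) = obind (fun s => subt s b) (subt t a).
Proof.
elim: a t => [|i a IH] [X cs|ss] //=.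
- by case: (onth cs i) => //= c.
- by case: (onth ss i) => //= [[Si [c|]]] //=.
Qed.

Lemma cliq_ext t a s r C : subt t a = Some s -> cliq s r = Some C ->
  exists C', cliq t (a ++ r) = Some C'.
Proof.
elim: a t => [|i a IH] t /=; first by case=> ->; eauto.
case: t => [X cs|ss] /=.
- case: (onth cs i) => //= c /IH H /H [C' ->] /=; eauto.
- case: (onth ss i) => //= [[Si [c|]]] //= /IH H /H [C' ->] /=; eauto.
Qed.

Lemma leaf_ex : forall s : mpq V,
  (forall b ss, subt s b = Some (QNode ss) -> 0 < size ss) -> exists r C, cliq s r = Some C.
Proof.
fix IH 1.
case=> [X [|c cs] | [| [Si [c|]] ss]] H.
- by exists [::], X.
- have [r [C Hr]] := IH c (fun b ss Hb => H (0 :: b) ss Hb).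
  by exists (0 :: r), (X :|: C); rewrite /= Hr.
- by have := H [::] [::] erefl.
- have [r [C Hr]] := IH c (fun b ss' Hb => H (0 :: b) ss' Hb).
  by exists (0 :: r), (Si :|: C); rewrite /= Hr.
- by exists [:: 0], Si.
Qed.

Definition onpath t p v := exists n,
  ((exists S cs, subt t (take n p) = Some (PNode S cs) /\ v \in S) /\ n <= size p) \/
  ((exists ss, subt t (take n p) = Some (QNode ss) /\ v \in section ss (nth 0 p n)) /\ n < size p).

Lemma onth_sec (ss : seq ({set V} * option (mpq V))) i Si o : onth ss i = Some (Si, o) -> section ss i = Si.
Proof. by rewrite /section => /(onth_nth (set0, None)) ->. Qed.

Lemma sec_lt (ss : seq ({set V} * option (mpq V))) i (v : V) : v \in section ss i -> i < size ss.
Proof.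
rewrite /section; case: ltnP => // h; by rewrite nth_default // inE.
Qed.

Lemma mem_cliq t p C v : cliq t p = Some C -> (v \in C <-> onpath t p v).
Proof.
elim: p t C => [|i p IH] t C.
- case: t => [X [|c cs]|ss] //= [<-]; split.
  + by move=> h; exists 0; left; split => //; exists X, [::].
  + by case=> n [[[S [cs [[<- _] h]]] _]|[_ //]].
- case: t => [X cs|ss] /=.
  + case Ec: (onth cs i) => [c|] //=.
    case Ecl: (cliq c p) => [C'|] //= [<-].
    rewrite inE; split.
    * case/orP=> h.
      - by exists 0; left; split => //; exists X, cs.
      - have [n H] := (IH c C' Ecl).1 h.
        exists n.+1; case: H => [[[S [cs' [h1 h2]]] h3]|[[ss [h1 h2]] h3]].
        + by left; split => //; exists S, cs'; rewrite /= Ec /=.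
        + by right; split => //; exists ss; rewrite /= Ec /=.
    * case=> [[|n]] [[[S [cs' [h1 h2]]] h3]|[[ss [h1 h2]] h3]] //=.
      - by move: h1 h2 => /= [-> _] ->.
      - apply/orP; right; apply/(IH c C' Ecl); exists n; left; split => //.
        by exists S, cs'; move: h1; rewrite /= Ec.
      - apply/orP; right; apply/(IH c C' Ecl); exists n; right; split => //.
        by exists ss; move: h1; rewrite /= Ec.
  + case Ec: (onth ss i) => [[Si [c|]]|] //=.
    * case Ecl: (cliq c p) => [C'|] //= [<-].
      rewrite inE; split.
      - case/orP=> h.
        + exists 0; right; split => //; exists ss; split => //.
          by rewrite /= (onth_sec Ec).
        + have [n H] := (IH c C' Ecl).1 h.
          exists n.+1; case: H => [[[S [cs' [h1 h2]]] h3]|[[ss' [h1 h2]] h3]].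
          * by left; split => //; exists S, cs'; rewrite /= Ec /=.
          * by right; split => //; exists ss'; rewrite /= Ec /=.
      - case=> [[|n]] [[[S [cs' [h1 h2]]] h3]|[[ss' [h1 h2]] h3]] //=.
        + by move: h1 h2 => /= [<-]; rewrite (onth_sec Ec) => ->.
        + apply/orP; right; apply/(IH c C' Ecl); exists n; left; split => //.
          by exists S, cs'; move: h1; rewrite /= Ec.
        + apply/orP; right; apply/(IH c C' Ecl); exists n; right; split => //.
          by exists ss'; move: h1; rewrite /= Ec.
    * case: p IH => // _ [<-]; split.
      - move=> h; exists 0; right; split => //; exists ss; split => //.
        by rewrite /= (onth_sec Ec).
      - case=> [[|n]] [[[S [cs' [h1 h2]]] h3]|[[ss' [h1 h2]] h3]] //=.
        + by move: h1 h2 => /= [<-]; rewrite (onth_sec Ec).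
        + by move: h1; rewrite /= Ec.
Qed.
End Basic.

Lemma c4_arith (lx rx ly ry lu ru lw rw : nat) : lx <= rx -> ly <= ry -> lu <= ru -> lw <= rw ->
  (lx <= ru /\ lu <= rx) -> (ly <= ru /\ lu <= ry) -> (ly <= rw /\ lw <= ry) ->
  (lx <= rw /\ lw <= rx) -> ~ (lu <= rw /\ lw <= ru) -> ~ (lx <= ry /\ ly <= rx) -> False.
Proof. lia. Qed.

Lemma side_arith (lc rc l1 r1 l2 r2 : nat) : l1 <= r1 -> l2 <= r2 -> lc <= rc ->
  ~ (l1 <= rc /\ lc <= r1) -> ~ (l2 <= rc /\ lc <= r2) -> (l1 <= r2 /\ l2 <= r1) ->
  (r1 < lc) = (r2 < lc).
Proof. by move=> *; case: ltnP => h1; case: ltnP => h2 //; exfalso; lia. Qed.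

Lemma at_arith (lx rx ly ry lu ru lw rw : nat) : lx <= rx -> ly <= ry -> lu <= ru -> lw <= rw ->
  (rw < lu) = (ry < lu) -> (ru < lw) = (ry < lw) ->
  (lx <= ru /\ lu <= rx) -> (lx <= rw /\ lw <= rx) ->
  ~ (lu <= rw /\ lw <= ru) -> ~ (lu <= ry /\ ly <= ru) -> ~ (lw <= ry /\ ly <= rw) ->
  ~ (lx <= ry /\ ly <= rx) -> False.
Proof.
move=> ? ? ? ?; case: ltnP => h1; case: ltnP => h2; case: ltnP => h3; case: ltnP => h4 //; lia.
Qed.

Section MPQ.
Variables (V : finType) (adj : rel V) (adj_sym : symmetric adj)
  (adj_irr : irreflexive adj) (t : mpq V) (tm : is_MPQ adj t).
Implicit Types (p q a b : seq nat) (ss : seq ({set V} * option (mpq V))).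

Lemma uniq_addr v a a' : inode t a v -> inode t a' v -> a = a'.
Proof. case: tm => H1 _; have [a0 [_ H]] := H1 v. by move=> /H -> /H ->. Qed.

Lemma addr_ex v : exists a, inode t a v.
Proof. case: tm => H1 _; have [a0 [h _]] := H1 v; eauto. Qed.

Lemma Qsize a ss : subt t a = Some (QNode ss) -> 3 <= size ss.
Proof. by case: tm => _ [H2 _] /H2 []. Qed.

Lemma Qint a ss v i : subt t a = Some (QNode ss) -> v \in section ss i ->
  exists l r, l < r /\ r < size ss /\
    forall i, i < size ss -> (v \in section ss i <-> l <= i /\ i <= r).
Proof.
case: tm => _ [H2 _] /H2 [_ H] hv; apply: H; exists i; split => //.
exact: sec_lt hv.
Qed.

Lemma cliq_max p C : cliq t p = Some C -> is_maxclique adj C.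
Proof. by case: tm => _ [_ [H3 _]] /H3. Qed.

Lemma cliq_inj p p' C : cliq t p = Some C -> cliq t p' = Some C -> p = p'.
Proof. by case: tm => _ [_ [_ [H4 _]]] /H4 H /H. Qed.

Lemma cliq_ex C : is_maxclique adj C -> exists p, cliq t p = Some C.
Proof. by case: tm => _ [_ [_ [_ [H5 _]]]] /H5. Qed.

Lemma path_node a s : subt t a = Some s -> exists r C, cliq t (a ++ r) = Some C.
Proof.
move=> hs.
have [r [C hC]] : exists r C, cliq s r = Some C.
  apply: leaf_ex => b ss hb.
  have : subt t (a ++ b) = Some (QNode ss) by rewrite subt_cat hs.
  by move/Qsize; case: (size ss).
have [C' hC'] := cliq_ext hs hC; eauto.
Qed.

Lemma path_Q q ss j : subt t q = Some (QNode ss) -> j < size ss ->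
  exists r C, cliq t (q ++ j :: r) = Some C.
Proof.
move=> hq hj.
case E: (onth ss j) => [[Si [c|]]|]; last first.
- by move: (onthNE ss j); rewrite E /= leqNgt hj.
- have h1 : cliq (QNode ss) [:: j] = Some Si by rewrite /= E.
  have [C hC] := cliq_ext hq h1; by exists [::], C.
- have h1 : subt t (q ++ [:: j]) = Some c by rewrite subt_cat hq /= E.
  have [r [C hC]] := path_node h1; exists r, C; by rewrite -catA in hC.
Qed.

Lemma path_P q S cs j : subt t q = Some (PNode S cs) -> j < size cs ->
  exists r C, cliq t (q ++ j :: r) = Some C.
Proof.
move=> hq hj.
case E: (onth cs j) => [c|]; last first.
- by move: (onthNE cs j); rewrite E /= leqNgt hj.
- have h1 : subt t (q ++ [:: j]) = Some c by rewrite subt_cat hq /= E.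
  have [r [C hC]] := path_node h1; exists r, C; by rewrite -catA in hC.
Qed.

Definition ndata v a p :=
  (exists S cs, subt t a = Some (PNode S cs) /\ v \in S) \/
  (exists ss, subt t a = Some (QNode ss) /\ size a < size p /\ v \in section ss (nth 0 p (size a))).

Lemma POS v a p C : inode t a v -> cliq t p = Some C -> v \in C ->
  take (size a) p = a /\ ndata v a p.
Proof.
move=> ha hp /(mem_cliq _ hp) [n [[[S [cs [h1 h2]]] h3]|[[ss [h1 h2]] h3]]].
- have E : take n p = a by apply: (uniq_addr _ ha); left; exists S, cs.
  have sz : size a = n by rewrite -E size_takel.
  by rewrite sz E; split => //; left; exists S, cs; rewrite -E.
- have E : take n p = a.
    apply: (uniq_addr _ ha); right; exists ss; split => //.
    exists (nth 0 p n); split => //; exact: sec_lt h2.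
  have sz : size a = n by rewrite -E size_takel // ltnW.
  by rewrite sz E; split => //; right; exists ss; rewrite sz -E.
Qed.

Lemma POS' v a p C : cliq t p = Some C -> take (size a) p = a -> ndata v a p -> v \in C.
Proof.
move=> hp ht hd; apply/(mem_cliq _ hp); exists (size a); rewrite ht.
have sz : size a <= size p.
  have : size (take (size a) p) <= size p by rewrite size_take_min geq_minr.
  by rewrite ht.
case: hd => [h|[ss [h1 [h2 h3]]]]; [left | right]; split => //; exists ss; by [].
Qed.

Lemma vin v a : inode t a v -> exists p C, cliq t p = Some C /\ take (size a) p = a /\ v \in C.
Proof.
move=> ha; case: (ha) => [[S [cs [h1 h2]]]|[ss [h1 [i [h2 h3]]]]].
- have [r [C hC]] := path_node h1; exists (a ++ r), C; split => //.
  have ht : take (size a) (a ++ r) = a by rewrite take_size_cat.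
  split => //; apply: (POS' hC ht); left; exists S, cs; by [].
- have [r [C hC]] := path_Q h1 h2; exists (a ++ i :: r), C; split => //.
  have ht : take (size a) (a ++ i :: r) = a by rewrite take_size_cat.
  split => //; apply: (POS' hC ht); right; exists ss; split => //.
  by rewrite size_cat /= addnS ltnS leq_addr nth_cat ltnn subnn.
Qed.

Lemma clique_adj p C u v : cliq t p = Some C -> u \in C -> v \in C -> u != v -> adj u v.
Proof. by move=> /cliq_max [cl _] hu hv huv; exact: cl hu hv huv. Qed.

Lemma max_ext_step K : is_clique adj K -> ~ is_maxclique adj K ->
  exists K', is_clique adj K' /\ K \subset K' /\ #|K| < #|K'|.
Proof.
move=> hK hm.
have [K' [cK' [sub ne]]] : exists K', is_clique adj K' /\ K \subset K' /\ K' <> K.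
  apply: NNPP => hh; apply: hm; split => // K' cK' sK'; apply: NNPP => ne; apply: hh; exists K'; by [].
exists K'; split => //; split => //.
apply: proper_card; rewrite properEneq sub andbT; apply/eqP => e; by apply: ne.
Qed.

Lemma max_ext K : is_clique adj K -> exists K', is_maxclique adj K' /\ K \subset K'.
Proof.
move: {2}(#|V| - #|K|) (leqnn (#|V| - #|K|)) => n.
elim: n K => [|n IH] K hn hK; case: (classic (is_maxclique adj K)) => [hm|hm];
  try by exists K.
- have [K' [_ [_ lt]]] := max_ext_step hK hm.
  by have := max_card K'; lia.
- have [K' [cK' [sub lt]]] := max_ext_step hK hm.
  have [K'' [h1 h2]] := IH K' ltac:(have := max_card K'; lia) cK'.
  exists K''; split => //; exact: subset_trans sub h2.
Qed.

Lemma adj_path u v : adj u v -> exists p C, cliq t p = Some C /\ u \in C /\ v \in C.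
Proof.
move=> huv.
have cl : is_clique adj [set u; v].
  move=> a b; rewrite !inE => /orP [] /eqP -> /orP [] /eqP -> //; rewrite ?eqxx //.
  by rewrite adj_sym.
have [K [mK sK]] := max_ext cl.
have [p hp] := cliq_ex mK.
exists p, K; split => //; split; apply: (subsetP sK); by rewrite !inE eqxx ?orbT.
Qed.

Lemma diff_cliq p0 p1 C0 C1 : cliq t p0 = Some C0 -> cliq t p1 = Some C1 -> p0 <> p1 ->
  exists u, u \in C0 /\ u \notin C1.
Proof.
move=> h0 h1 ne; case: (boolP (C0 \subset C1)) => [sub|/subsetPn [u h2 h3]]; last by eauto.
have [_ mx0] := cliq_max h0; have [cl1 _] := cliq_max h1.
have E := mx0 C1 cl1 sub; rewrite E in h1.
by have := cliq_inj h0 h1.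
Qed.

Lemma nth_size_cat q j r : nth 0 (q ++ j :: r) (size q) = j.
Proof. by rewrite nth_cat ltnn subnn. Qed.

Lemma take_rcons_info p q j : take (size q).+1 p = rcons q j ->
  size q < size p /\ take (size q) p = q /\ nth 0 p (size q) = j.
Proof.
move=> h.
have sz : size q < size p.
  have := size_take_min (size q).+1 p; rewrite h size_rcons; lia.
split => //; rewrite (take_nth 0 sz) in h.
by move/eqP: h; rewrite eqseq_rcons => /andP [/eqP -> /eqP ->].
Qed.

Lemma take_cat_rcons q j r : take (size q).+1 (q ++ j :: r) = rcons q j.
Proof. by rewrite take_cat ltnNge leqnSn /= subSn // subnn /= take0 cats1. Qed.

Lemma posinfo u au q j0 j1 r0 r1 C0 C1 p C :
  inode t au u -> cliq t (q ++ j0 :: r0) = Some C0 -> cliq t (q ++ j1 :: r1) = Some C1 ->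
  u \in C0 -> u \notin C1 -> cliq t p = Some C -> u \in C ->
  size q < size p /\ take (size q) p = q /\
  (nth 0 p (size q) = j0 \/ exists ss, subt t q = Some (QNode ss) /\
     u \in section ss (nth 0 p (size q)) /\ u \in section ss j0 /\ u \notin section ss j1).
Proof.
move=> hu h0 h1 i0 n1 hp i.
have [T0 N0] := POS hu h0 i0.
have [T N] := POS hu hp i.
have szp : size au <= size p.
  have : size (take (size au) p) <= size p by rewrite size_take_min geq_minr.
  by rewrite T.
case: (ltngtP (size au) (size q)) => c.
- exfalso; move/negP: n1; apply; apply: (POS' (a:=au) h1).
    by rewrite (takel_cat _ (ltnW c)) -{2}T0 (takel_cat _ (ltnW c)).
  case: N0 => [hP|[ss [h2 [h3 h4]]]]; first by left.
  right; exists ss; split => //; split; first by rewrite size_cat /= addnS ltnS ltnW // ltn_addr.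
  by move: h4; rewrite !nth_cat c.
- have E : take (size q).+1 au = rcons q j0.
    by rewrite -T0 (take_takel _ c) take_cat_rcons.
  have E' : take (size q).+1 p = rcons q j0 by rewrite -E -T (take_takel _ c).
  have [a1 [a2 a3]] := take_rcons_info E'; split => //; split => //; by left.
- have E : au = q.
    by rewrite -T0 c take_size_cat.
  subst au.
  case: N0 => [[S [cs [hP _]]]|[ss [h2 [h3 h4]]]].
  + exfalso; move/negP: n1; apply; apply: (POS' (a:=q) h1); first by rewrite take_size_cat.
    case: N => [hd|[ss [h2 _]]]; first by left.
    by rewrite hP in h2.
  + case: N => [[S [cs [hP _]]]|[ss' [h2' [h3' h4']]]]; first by rewrite hP in h2.
    rewrite h2 in h2'; case: h2' => E; subst ss'.
    do 2 (split => //); right; exists ss; split => //; split => //.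
    rewrite nth_size_cat in h4; split => //.
    apply/negP => h5; move/negP: n1; apply; apply: (POS' (a:=q) h1); first by rewrite take_size_cat.
    right; exists ss; split => //; rewrite nth_size_cat size_cat /= addnS ltnS leq_addr; by [].
Qed.

Lemma sep q j0 j1 r0 r1 C0 C1 u w au aw :
  inode t au u -> inode t aw w ->
  cliq t (q ++ j0 :: r0) = Some C0 -> cliq t (q ++ j1 :: r1) = Some C1 ->
  u \in C0 -> u \notin C1 -> w \in C1 -> w \notin C0 ->
  ((exists S cs, subt t q = Some (PNode S cs)) /\ j0 != j1) \/
  ((exists ss, subt t q = Some (QNode ss)) /\ j1 = j0.+1) ->
  ~~ adj u w.
Proof.
move=> hu hw h0 h1 u0 u1 w1 w0 H; apply/negP => /adj_path [p [C [hp [iu iw]]]].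
have [_ [_ U]] := posinfo hu h0 h1 u0 u1 hp iu.
have [_ [_ W]] := posinfo hw h1 h0 w1 w0 hp iw.
case: H => [[[S [cs E]] ne]|[[ss E] e1]].
- case: U => [U|[ss [E' _]]]; last by rewrite E in E'.
  case: W => [W|[ss [E' _]]]; last by rewrite E in E'.
  by rewrite -U -W eqxx in ne.
- subst j1.
  case: U => [U|[ss1 [E1 [U1 [U2 U3]]]]]; case: W => [W|[ss2 [E2 [W1 [W2 W3]]]]].
  + by rewrite U in W; lia.
  + by rewrite U in W1; rewrite W1 in W3.
  + by rewrite W in U1; rewrite U1 in U3.
  + rewrite E in E1 E2; case: E1 => ?; case: E2 => ?; subst ss1 ss2.
    set j := nth 0 p (size q) in U1 W1.
    have [l [r [_ [_ Hu]]]] := Qint E U1.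
    have [l' [r' [_ [_ Hw]]]] := Qint E W1.
    have lj := sec_lt U1; have lj1 := sec_lt W2; have lj0 := sec_lt U2.
    have [a1 a2] := (Hu _ lj).1 U1.
    have [a3 a4] := (Hu _ lj0).1 U2.
    have a5 : ~ (l <= j0.+1 /\ j0.+1 <= r) by move/(Hu _ lj1); apply/negP.
    have [b1 b2] := (Hw _ lj).1 W1.
    have [b3 b4] := (Hw _ lj1).1 W2.
    have b5 : ~ (l' <= j0 /\ j0 <= r') by move/(Hw _ lj0); apply/negP.
    move: a1 a2 a3 a4 a5 b1 b2 b3 b4 b5; clear; lia.
Qed.

Lemma find_C4 q j0 j1 r0 r1 C0 C1 x y :
  cliq t (q ++ j0 :: r0) = Some C0 -> cliq t (q ++ j1 :: r1) = Some C1 -> j0 != j1 ->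
  x \in C0 -> x \in C1 -> y \in C0 -> y \in C1 -> x != y ->
  ((exists S cs, subt t q = Some (PNode S cs)) /\ j0 != j1) \/
  ((exists ss, subt t q = Some (QNode ss)) /\ j1 = j0.+1) ->
  exists u w, [/\ adj x u, adj u y, adj y w, adj w x & ~~ adj u w] /\
    [/\ u != w, u != x, u != y, w != x & w != y].
Proof.
move=> h0 h1 ne x0 x1 y0 y1 xy H.
have neq : q ++ j0 :: r0 <> q ++ j1 :: r1.
  move=> e; have := congr1 (fun s => nth 0 s (size q)) e.
  by rewrite /= !nth_size_cat => /eqP; rewrite (negbTE ne).
have [u [u0 u1]] := diff_cliq h0 h1 neq.
have [w [w1 w0]] := diff_cliq h1 h0 (fun e => neq (esym e)).
have [au hu] := addr_ex u; have [aw hw] := addr_ex w.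
have nuw := sep hu hw h0 h1 u0 u1 w1 w0 H.
have ux : u != x by apply/eqP => e; subst; rewrite x1 in u1.
have uy : u != y by apply/eqP => e; subst; rewrite y1 in u1.
have wx : w != x by apply/eqP => e; subst; rewrite x0 in w0.
have wy : w != y by apply/eqP => e; subst; rewrite y0 in w0.
have uw : u != w by apply/eqP => e; subst; rewrite w1 in u1.
exists u, w; split; last by [].
split.
- by apply: (clique_adj h0) => //; rewrite eq_sym.
- exact: (clique_adj h0).
- by apply: (clique_adj h1) => //; rewrite eq_sym.
- exact: (clique_adj h1).
- exact: nuw.
Qed.

Lemma take_agree p p' k : take k.+1 p = take k.+1 p' -> take k p = take k p' /\ nth 0 p k = nth 0 p' k.
Proof.
move=> e; split.
- by rewrite -(take_takel p (leqnSn k)) e take_takel.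
- by rewrite -(nth_take 0 (ltnSn k) p) e nth_take.
Qed.

Section Main.
Variables (x y : V) (ax ay : seq nat) (exy : adj x y)
  (hx : inode t ax x) (hy : inode t ay y) (szxy : size ax < size ay).

Lemma KX p C : cliq t p = Some C -> take (size ax).+1 p = take (size ax).+1 ay -> x \in C.
Proof.
move=> hp ht.
have [p0 [C0 [h0 [ix iy]]]] := adj_path exy.
have [Ty _] := POS hy h0 iy.
have [Tx Nx] := POS hx h0 ix.
have E : take (size ax).+1 p = take (size ax).+1 p0 by rewrite ht -Ty (take_takel _ szxy).
have szp : size ax < size p.
  have := size_take_min (size ax).+1 p; rewrite ht size_takel //; lia.
have [E1 E2] := take_agree E.
apply: (POS' (a:=ax) hp); first by rewrite E1.
case: Nx => [hP|[ss [h1 [h2 h3]]]]; first by left.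
by right; exists ss; rewrite E2.
Qed.

Lemma caseC : through_central t ax ay ->
  exists u w, [/\ adj x u, adj x w, ~~ adj u y, ~~ adj w y & ~~ adj u w] /\
   [/\ u != w, u != y, w != y, u != x & w != x] /\ y != x /\
   (forall f : V -> bool, (forall v1 v2, v1 != x -> v2 != x -> ~~ adj v1 u -> v1 != u ->
       ~~ adj v2 u -> v2 != u -> (v1 = v2 \/ adj v1 v2) -> f v1 = f v2) -> f w = f y) /\
   (forall g : V -> bool, (forall v1 v2, v1 != x -> v2 != x -> ~~ adj v1 w -> v1 != w ->
       ~~ adj v2 w -> v2 != w -> (v1 = v2 \/ adj v1 v2) -> g v1 = g v2) -> g u = g y).
Proof.
case=> m [c1 [c2 [ss [Eq [a0 ak]]]]].
set q := take m ay in Eq.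
have szq : size q = m by rewrite size_takel // ltnW.
set a := nth 0 ay m in a0 ak.
have k3 := Qsize Eq.
have [[u [bu hu]] [[w [bw hw]] [_ [_ [_ He]]]]] :
  let k := size ss in let Sec := section ss in
     (exists v, inV t q 0 v) /\ (exists v, inV t q k.-1 v) /\
     Sec 0 \subset Sec 1 /\ Sec k.-1 \subset Sec k.-2 /\
     (forall i, 0 < i -> i < k ->
        Sec i.-1 :&: Sec i != set0 /\
        Sec i.-1 != Sec i /\
        (exists v, (v \in Sec i.-1 \/ inV t q i.-1 v) /\ v \notin Sec i) /\
                  (exists v, (v \in Sec i \/ inV t q i v) /\ v \notin Sec i.-1)) /\
     (forall i, 0 < i -> i < k.-1 ->
        (Sec i :&: Sec i.+1) :\: Sec 0 != set0 /\
        (Sec i.-1 :&: Sec i) :\: Sec k.-1 != set0).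
  by case: tm => _ [_ [_ [_ [_ [_ [H7 _]]]]]]; apply: H7.
pose deep v j := exists av, inode t av v /\ take m.+1 av = rcons q j.
have dp : forall v j p C, deep v j -> cliq t p = Some C -> v \in C -> take m.+1 p = rcons q j.
  move=> v j p C [av [hv hav]] hp hvC.
  have [T _] := POS hv hp hvC.
  have sz : m < size av.
    have := size_take_min m.+1 av; rewrite hav size_rcons szq; clear -hav; lia.
  by rewrite -hav -T (take_takel _ sz).
have dcl : forall v j, deep v j -> exists p C, [/\ cliq t p = Some C, v \in C, x \in C & take m.+1 p = rcons q j].
  move=> v j hd; case: (hd) => av [hv _].
  have [p [C [hp [_ hvC]]]] := vin hv.
  have E := dp _ _ _ _ hd hp hvC.
  exists p, C; split => //; apply: (KX hp).
  have l1 : (size ax).+1 <= m.+1 by rewrite ltnS ltnW.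
  have l2 : (size ax).+1 <= size q by rewrite szq.
  rewrite -(take_takel p l1) E -cats1 (takel_cat _ l2) /q take_takel //.
have du : deep u 0 by exists (q ++ 0 :: bu); split => //; rewrite -szq take_cat_rcons.
have dw : deep w (size ss).-1 by exists (q ++ (size ss).-1 :: bw); split => //; rewrite -szq take_cat_rcons.
have dy : deep y a by exists ay; split => //; rewrite /q /a (take_nth 0 c2).
have secQ : forall s i p C, s \in section ss i -> cliq t p = Some C -> take m.+1 p = rcons q i -> s \in C.
  move=> s i p C hs hp ht; rewrite -szq in ht.
  have [i1 [i2 i3]] := take_rcons_info ht.
  apply: (POS' (a:=q) hp i2); right; exists ss; by rewrite i3.
have inq : forall s i, s \in section ss i -> inode t q s.
  move=> s i hs; right; exists ss; split => //; exists i; split => //; exact: sec_lt hs.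
have rc_inj : forall j j', rcons q j = rcons q j' -> j = j'.
  by move=> j j' /eqP; rewrite eqseq_rcons => /andP [_ /eqP].
have deep_nadj : forall v v' j j', deep v j -> deep v' j' -> j != j' -> ~~ adj v v' /\ v != v'.
  move=> v v' j j' hv hv' ne; split.
  - apply/negP => /adj_path [p [C [hp [i1 i2]]]].
    have := dp _ _ _ _ hv hp i1; rewrite (dp _ _ _ _ hv' hp i2) => /rc_inj e.
    by rewrite e eqxx in ne.
  - apply/eqP => e; subst v'.
    have [p [C [hp i1 _ _]]] := dcl _ _ hv.
    have := dp _ _ _ _ hv hp i1; rewrite (dp _ _ _ _ hv' hp i1) => /rc_inj e.
    by rewrite e eqxx in ne.
have sec_deep_neq : forall s i v j, s \in section ss i -> deep v j -> s != v.
  move=> s i v j hs [av [hv hav]]; apply/eqP => e; subst v.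
  have e := uniq_addr (inq _ _ hs) hv; subst av.
  by have := size_rcons q j; rewrite -hav size_take_min szq; clear -szq; lia.
have sec_deep_nadj : forall s i v j, s \in section ss i -> s \notin section ss j -> deep v j -> ~~ adj s v.
  move=> s i v j hs ns hv; apply/negP => /adj_path [p [C [hp [i1 i2]]]].
  have E := dp _ _ _ _ hv hp i2; rewrite -szq in E.
  have [e1 [e2 e3]] := take_rcons_info E.
  have [_ N] := POS (inq _ _ hs) hp i1.
  case: N => [[S [cs [h _]]]|[ss' [h [_ h']]]]; first by rewrite Eq in h.
  rewrite Eq in h; case: h => ?; subst ss'.
  by rewrite e3 in h'; rewrite h' in ns.
have sec_deep_adj : forall s v j, s \in section ss j -> deep v j -> adj s v.
  move=> s v j hs hv.
  have [p [C [hp i1 _ E]]] := dcl _ _ hv.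
  exact: (clique_adj hp (secQ _ _ _ _ hs hp E) i1 (sec_deep_neq _ _ _ _ hs hv)).
have sec_sec : forall s s' i, s \in section ss i -> s' \in section ss i -> s = s' \/ adj s s'.
  move=> s s' i hs hs'.
  have [r [C hp]] := path_Q Eq (sec_lt hs).
  have E : take m.+1 (q ++ i :: r) = rcons q i by rewrite -szq take_cat_rcons.
  case: (eqVneq s s') => [e|ne]; [by left | right].
  exact: (clique_adj hp (secQ _ _ _ _ hs hp E) (secQ _ _ _ _ hs' hp E) ne).
have sec_neq_x : forall s i, s \in section ss i -> s != x.
  move=> s i hs; apply/eqP => e; subst s.
  have e := uniq_addr hx (inq _ _ hs); subst ax.
  by rewrite szq ltnn in c1.
have deep_neq_x : forall v j, deep v j -> v != x.
  move=> v j [av [hv hav]]; apply/eqP => e; subst v.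
  have e := uniq_addr hx hv; subst av.
  by have := size_take_min m.+1 ax; rewrite hav size_rcons szq; clear -c1; lia.
have ne0k : 0 != (size ss).-1 by rewrite eq_sym -lt0n; clear -k3; lia.
have ne0a : 0 != a by rewrite eq_sym -lt0n.
have neak : a != (size ss).-1 by rewrite neq_ltn ak.
have [nuy uy] := deep_nadj _ _ _ _ du dy ne0a.
have nka : (size ss).-1 != a by rewrite eq_sym.
have [nwy wy] := deep_nadj _ _ _ _ dw dy nka.
have [nuw uw] := deep_nadj _ _ _ _ du dw ne0k.
have nk0 : (size ss).-1 != 0 by rewrite eq_sym.
have [nwu wu] := deep_nadj _ _ _ _ dw du nk0.
have ux := deep_neq_x _ _ du; have wx := deep_neq_x _ _ dw; have yx := deep_neq_x _ _ dy.
have xadj : forall v j, deep v j -> adj x v.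
  move=> v j hv; have [p [C [hp i1 i2 _]]] := dcl _ _ hv.
  by apply: (clique_adj hp i2 i1); rewrite eq_sym (deep_neq_x _ _ hv).
have getR : forall i, 0 < i -> i < (size ss).-1 -> exists s, [/\ s \in section ss i,
    s \in section ss i.+1 & s \notin section ss 0].
  move=> i h1 h2; have := (He i h1 h2).1; case/set0Pn => s; rewrite !inE => /andP [ns /andP [s1 s2]].
  by exists s.
have getL : forall i, 0 < i -> i < (size ss).-1 -> exists s, [/\ s \in section ss i.-1,
    s \in section ss i & s \notin section ss (size ss).-1].
  move=> i h1 h2; have := (He i h1 h2).2; case/set0Pn => s; rewrite !inE => /andP [ns /andP [s1 s2]].
  by exists s.
exists u, w; split; first by split => //; [exact: xadj du | exact: xadj dw].
split; first by split.
split => //; split.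
- move=> f Hf.
  have R : forall i, a <= i -> i < (size ss).-1 -> exists s, [/\ s \in section ss i,
      s \in section ss i.+1, s \notin section ss 0 & f s = f y].
    elim=> [|i IH] hai hik; first by clear -hai a0; lia.
    case: (eqVneq a i.+1) => [ea|nea].
    + have [s [s1 s2 ns]] := getR i.+1 erefl hik.
      exists s; split => //; apply: Hf.
      * exact: sec_neq_x s1.
      * exact: yx.
      * exact: sec_deep_nadj s1 ns du.
      * exact: sec_deep_neq s1 du.
      * by rewrite adj_sym.
      * by rewrite eq_sym.
      * by right; apply: sec_deep_adj dy; rewrite ea.
    + have hai' : a <= i by move: hai nea; rewrite leq_eqVlt => /orP [/eqP -> | //]; rewrite eqxx.
      have [s [s1 s2 ns fs]] := IH hai' (ltnW hik).
      have [s' [s1' s2' ns']] := getR i.+1 erefl hik.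
      exists s'; split => //; rewrite -fs; apply: Hf.
      * exact: sec_neq_x s1'.
      * exact: sec_neq_x s1.
      * exact: sec_deep_nadj s1' ns' du.
      * exact: sec_deep_neq s1' du.
      * exact: sec_deep_nadj s1 ns du.
      * exact: sec_deep_neq s1 du.
      * exact: sec_sec s1' s2.
  have [s [s1 s2 ns fs]] := R (size ss).-2 ltac:(clear -ak; lia) ltac:(clear -k3; lia).
  have e : (size ss).-2.+1 = (size ss).-1 by clear -k3; lia.
  rewrite e in s2; rewrite -fs; apply: Hf.
  + exact: wx.
  + exact: sec_neq_x s1.
  + exact: nwu.
  + exact: wu.
  + exact: sec_deep_nadj s1 ns du.
  + exact: sec_deep_neq s1 du.
  + by right; rewrite adj_sym; exact: sec_deep_adj s2 dw.
- move=> g Hg.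
  have L : forall d i, i + d = a -> 0 < i -> exists s, [/\ s \in section ss i.-1,
      s \in section ss i, s \notin section ss (size ss).-1 & g s = g y].
    elim=> [|d IH] i hid hi.
    + rewrite addn0 in hid; subst i.
      have [s [s1 s2 ns]] := getL a a0 ak.
      exists s; split => //; apply: Hg.
      * exact: sec_neq_x s1.
      * exact: yx.
      * exact: sec_deep_nadj s2 ns dw.
      * exact: sec_deep_neq s2 dw.
      * by rewrite adj_sym.
      * by rewrite eq_sym.
      * by right; apply: sec_deep_adj dy.
    + have [s [s1 s2 ns fs]] := IH i.+1 ltac:(clear -hid; lia) erefl.
      have [s' [s1' s2' ns']] := getL i hi ltac:(clear -hid ak; lia).
      exists s'; split => //; rewrite -fs; apply: Hg.
      * exact: sec_neq_x s1'.
      * exact: sec_neq_x s1.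
      * exact: sec_deep_nadj s2' ns' dw.
      * exact: sec_deep_neq s2' dw.
      * exact: sec_deep_nadj s1 ns dw.
      * exact: sec_deep_neq s1 dw.
      * exact: sec_sec s2' s1.
  have [s [s1 s2 ns gs]] := L a.-1 1 ltac:(clear -a0; lia) erefl.
  rewrite -gs; apply: Hg.
  + exact: ux.
  + exact: sec_neq_x s1.
  + exact: nuw.
  + exact: uw.
  + exact: sec_deep_nadj s1 ns dw.
  + exact: sec_deep_neq s1 dw.
  + by right; rewrite adj_sym; exact: sec_deep_adj s1 du.
Qed.

Lemma main_aux : ~ almost_rotable t ax ay -> ~ interval_edge adj x y.
Proof.
move=> hnot [_ [lf [rf [Hlr Hiff]]]].
have xy : x != y by apply/eqP => e; move: exy; rewrite e adj_irr.
have OV : forall (a b : V), adj a b -> a != x -> b != x -> lf a <= rf b /\ lf b <= rf a.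
  move=> a b hab ha hb; have ne : a != b by apply/eqP => e; subst; rewrite adj_irr in hab.
  apply/(Hiff _ _ ne); rewrite /remove_edge hab (negbTE ha) (negbTE hb) /=.
  by rewrite andbF.
have OV2 : forall (a b : V), adj a b -> b != x -> b != y -> lf a <= rf b /\ lf b <= rf a.
  move=> a b hab ha hb; have ne : a != b by apply/eqP => e; subst; rewrite adj_irr in hab.
  apply/(Hiff _ _ ne); rewrite /remove_edge hab (negbTE ha) (negbTE hb) /=.
  by rewrite !andbF.
have NOV : forall (a b : V), ~~ adj a b -> a != b -> ~ (lf a <= rf b /\ lf b <= rf a).
  by move=> a b nab ne /(Hiff _ _ ne); rewrite /remove_edge (negbTE nab).
have NXY : ~ (lf x <= rf y /\ lf y <= rf x).
  by move/(Hiff _ _ xy); rewrite /remove_edge !eqxx /= andbF.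
have C4 : forall (u w : V), [/\ adj x u, adj u y, adj y w, adj w x & ~~ adj u w] /\
    [/\ u != w, u != x, u != y, w != x & w != y] -> False.
  move=> u w [[xu uy yw wx nuw] [uw ux uy' wx' wy']].
  have h1 := OV2 _ _ xu ux uy'.
  have h2 := OV2 _ _ (_ : adj y u) ux uy'.
  have h3 := OV2 _ _ yw wx' wy'.
  have h4 := OV2 _ _ (_ : adj x w) wx' wy'.
  have h5 := NOV _ _ nuw uw.
  rewrite adj_sym in uy; rewrite adj_sym in wx.
  exact: (c4_arith (Hlr x) (Hlr y) (Hlr u) (Hlr w) h1 (h2 uy) h3 (h4 wx) h5 NXY).
case: (classic (through_central t ax ay)) => [TC|NTC].
- have [u [w [[xu xw nuy nwy nuw] [[uw uy wy ux wx] [yx [Hf Hg]]]]]] := caseC TC.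
  have side : forall (c v1 v2 : V), ~ (lf v1 <= rf c /\ lf c <= rf v1) -> ~ (lf v2 <= rf c /\ lf c <= rf v2) ->
      (v1 = v2 \/ (lf v1 <= rf v2 /\ lf v2 <= rf v1)) -> (rf v1 < lf c) = (rf v2 < lf c).
    move=> c v1 v2 n1 n2 [->//|o].
    exact: (side_arith (Hlr v1) (Hlr v2) (Hlr c) n1 n2 o).
  have fw := Hf (fun v => rf v < lf u) (fun v1 v2 h1 h2 h3 h4 h5 h6 h7 =>
     side u v1 v2 (NOV _ _ h3 h4) (NOV _ _ h5 h6)
       (match h7 with or_introl e => or_introl e | or_intror a => or_intror (OV _ _ a h1 h2) end)).
  have gu := Hg (fun v => rf v < lf w) (fun v1 v2 h1 h2 h3 h4 h5 h6 h7 =>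
     side w v1 v2 (NOV _ _ h3 h4) (NOV _ _ h5 h6)
       (match h7 with or_introl e => or_introl e | or_intror a => or_intror (OV _ _ a h1 h2) end)).
  have o1 := OV2 _ _ xu ux uy.
  have o2 := OV2 _ _ xw wx wy.
  have n1 := NOV _ _ nuw uw.
  have n2 := NOV _ _ nuy uy.
  have n3 := NOV _ _ nwy wy.
  exact: (at_arith (Hlr x) (Hlr y) (Hlr u) (Hlr w) fw gu o1 o2 n1 n2 n3 NXY).
- have NL : ~ exists S, subt t ay = Some (PNode S [::]) by move=> h; apply: hnot; split.
  case: hy => [[S [cs [Ey yS]]]|[ss [Ey [i [il yi]]]]].
  + case: cs Ey => [|c [|c' cs]] Ey.
    * by apply: NL; exists S.
    * case: c Ey => [S' cs'|ss'] Ey.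
      - by case: tm => _ [_ [_ [_ [_ [_ [_ [_ H9]]]]]]]; apply: (H9 ay S S' cs').
      - have Eq : subt t (rcons ay 0) = Some (QNode ss') by rewrite -cats1 subt_cat Ey.
        have k3 := Qsize Eq.
        have [r0 [C0 h0]] := path_Q Eq (leq_trans (isT : 0 < 3) k3).
        have [r1 [C1 h1]] := path_Q Eq (leq_trans (isT : 1 < 3) k3).
        have Kx : forall j r C, cliq t (rcons ay 0 ++ j :: r) = Some C -> x \in C.
          move=> j r C h; apply: (KX h).
          by rewrite -cats1 -catA (takel_cat _ szxy).
        have Ky : forall j r C, cliq t (rcons ay 0 ++ j :: r) = Some C -> y \in C.
          move=> j r C h; apply: (POS' (a:=ay) h).
            by rewrite -cats1 -catA take_size_cat.
          by left; exists S, [:: QNode ss'].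
        have HH : ((exists S cs, subt t (rcons ay 0) = Some (PNode S cs)) /\ 0 != 1) \/
          ((exists ss, subt t (rcons ay 0) = Some (QNode ss)) /\ 1 = 0.+1) by right; split => //; exists ss'.
        have [u [w H]] := find_C4 h0 h1 isT (Kx _ _ _ h0) (Kx _ _ _ h1) (Ky _ _ _ h0) (Ky _ _ _ h1) xy HH.
        exact: C4 H.
    * have [r0 [C0 h0]] := path_P Ey (isT : 0 < size [:: c, c' & cs]).
      have [r1 [C1 h1]] := path_P Ey (isT : 1 < size [:: c, c' & cs]).
      have Kx : forall j r C, cliq t (ay ++ j :: r) = Some C -> x \in C.
        by move=> j r C h; apply: (KX h); rewrite (takel_cat _ szxy).
      have Ky : forall j r C, cliq t (ay ++ j :: r) = Some C -> y \in C.
        move=> j r C h; apply: (POS' (a:=ay) h); first by rewrite take_size_cat.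
        by left; exists S, [:: c, c' & cs].
      have HH : ((exists S cs, subt t ay = Some (PNode S cs)) /\ 0 != 1) \/
          ((exists ss, subt t ay = Some (QNode ss)) /\ 1 = 0.+1) by left; split => //; exists S, [:: c, c' & cs].
      have [u [w H]] := find_C4 h0 h1 isT (Kx _ _ _ h0) (Kx _ _ _ h1) (Ky _ _ _ h0) (Ky _ _ _ h1) xy HH.
      exact: C4 H.
  + have [l [r [lr [rk Hi]]]] := Qint Ey yi.
    have yl : y \in section ss l by apply/Hi; [exact: ltn_trans lr rk | split => //; exact: ltnW].
    have yl1 : y \in section ss l.+1 by apply/Hi; [exact: leq_ltn_trans lr rk | split => //; exact: leqnSn].
    have [r0 [C0 h0]] := path_Q Ey (sec_lt yl).
    have [r1 [C1 h1]] := path_Q Ey (sec_lt yl1).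
    have Kx : forall j r C, cliq t (ay ++ j :: r) = Some C -> x \in C.
      by move=> j r' C h; apply: (KX h); rewrite (takel_cat _ szxy).
    have Ky : forall j r C, y \in section ss j -> cliq t (ay ++ j :: r) = Some C -> y \in C.
      move=> j r' C hj h; apply: (POS' (a:=ay) h); first by rewrite take_size_cat.
      right; exists ss; split => //; rewrite nth_size_cat size_cat /= addnS ltnS leq_addr; by [].
    have nl : l != l.+1 by rewrite neq_ltn ltnSn.
    have HH : ((exists S cs, subt t ay = Some (PNode S cs)) /\ l != l.+1) \/
          ((exists ss, subt t ay = Some (QNode ss)) /\ l.+1 = l.+1) by right; split => //; exists ss.
    have [u [w H]] := find_C4 h0 h1 nl (Kx _ _ _ h0) (Kx _ _ _ h1) (Ky _ _ _ yl h0) (Ky _ _ _ yl1 h1) xy HH.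
    exact: C4 H.
Qed.

End Main.
End MPQ.

Theorem mainTheorem12 (V : finType) (adj : rel V)
  (adj_sym : symmetric adj) (adj_irr : irreflexive adj)
  (G_int : is_interval_graph adj)
  (t : mpq V) (t_mpq : is_MPQ adj t)
  (x y : V) (ax ay : seq nat)
  (exy : adj x y)
  (hx : inode t ax x) (hy : inode t ay y)
  (x_over_y : prefix ax ay) (hneq : ax <> ay)
  (hnot : ~ almost_rotable t ax ay) :
  ~ interval_edge adj x y.
Proof.
have sz : size ax < size ay.
  move: x_over_y; rewrite prefixE => /eqP E.
  have : size ax <= size ay by rewrite -E size_take_min geq_minr.
  rewrite leq_eqVlt => /orP [/eqP e|//]; exfalso; apply: hneq; by rewrite -E e take_size.
exact: (main_aux adj_sym adj_irr t_mpq exy hx hy sz hnot).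
Qed.
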